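(* Let $T$ be a tree with root $r$, edges directed towards $r$, edge set $E$, and let $B,R$ be disjoint sets of leaves of $T$. If $X\subseteq Y\subseteq E$, then $\bar b(Y)\subseteq \bar b(X)$ and $\bar r(Y)\subseteq \bar r(X)$.
   Context: Edges are ordered pairs $st$ pointing from $s$ to $t$, directed towards $r$; a leaf is a vertex with no incoming edges. $A(v,X)$ is the number of edges of $X$ pointing to $v$ minus the number of edges of $X$ pointing away from $v$, and $A(v,X,Y)=A(v,X)-A(v,Y)$. The \emph{blue overflow} $\bar b(X)$ of $X\subseteq E$ is defined by transfinite recursion: $Y_0$ is the set of all edges in $E\setminus X$ whose starting vertex is in $B$; at a successor $\alpha=\beta+1$, if every $st\in E\setminus(X\cup Y_\beta)$ satisfies $A(s,Y_\beta,X)\le 0$, stop and set $\bar b(X)=Y_\beta$; otherwise pick some $st\in E\setminus (X\cup Y_\beta)$ with $A(s,Y_\beta,X)\ge 1$ and let $Y_\alpha=Y_\beta\cup\{st\}$; at limits $Y_\alpha=\bigcup_{\beta<\alpha}Y_\beta$. (The result does not depend on the choices made.) The \emph{red overflow} $\bar r(X)$ is defined identically with $R$ in place of $B$. *)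

(* Defs.v *)
From mathcomp Require Import all_boot all_order all_algebra.
From mathcomp Require Import boolp classical_sets functions cardinality.
From mathcomp Require Import finmap.
Local Open Scope fset_scope.
Set Implicit Arguments. Unset Strict Implicit. Unset Printing Implicit Defensive.
Import GRing.Theory Num.Theory.
Local Open Scope classical_set_scope.
Local Open Scope ring_scope.

Section Overflow.
Variable V : choiceType.

(* An edge st is the pair (s,t), pointing from s to t. *)
Notation edge := (V * V)%type.

Inductive reaches (E : set edge) (r : V) : V -> Prop :=
| reaches_root : reaches E r r
| reaches_step v w : E (v, w) -> reaches E r w -> reaches E r v.

Definition rooted_tree (E : set edge) (r : V) : Prop :=
  [/\ forall e, E e -> e.1 <> r,
      forall v, v <> r -> exists! w, E (v, w)
    & forall v, reaches E r v].

(* Every vertex has finitely many incoming edges (needed for A to be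
   an integer). *)
Definition locally_finite (E : set edge) : Prop :=
  forall v, finite_set [set e | E e /\ e.2 = v].

Definition leaf (E : set edge) (v : V) : Prop := forall e, E e -> e.2 <> v.

Definition ncard (X : set edge) : int := (#|` fset_set X|)%:Z.

Definition Acount (v : V) (X : set edge) : int :=
  ncard [set e | X e /\ e.2 = v] - ncard [set e | X e /\ e.1 = v].

Definition Acount2 (v : V) (X Y : set edge) : int := Acount v X - Acount v Y.

Definition ovf_start (E : set edge) (S : set V) (X : set edge) : set edge :=
  [set e | E e /\ ~ X e /\ S e.1].

Definition ovf_addable (E X Y : set edge) (e : edge) : Prop :=
  [/\ E e, ~ X e, ~ Y e & 1 <= Acount2 e.1 Y X].

Definition ovf_stop (E X Y : set edge) : Prop :=
  forall e, E e -> ~ X e -> ~ Y e -> Acount2 e.1 Y X <= 0.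

(* A run of the transfinite recursion, indexed by a well-ordered type
   (I, lt) with greatest element top (i.e. by an ordinal top+1), with
   stages Yf, ending (stopping) at stage top. *)
Definition ovf_run (E : set edge) (S : set V) (X : set edge)
  (I : Type) (lt : I -> I -> Prop) (Yf : I -> set edge) (top : I) : Prop :=
  [/\ well_founded lt,
      (forall i j k, lt i j -> lt j k -> lt i k),
      (forall i j, [\/ lt i j, i = j | lt j i])
    & (forall i, i = top \/ lt i top)] /\
  [/\
      (forall i, (forall j, ~ lt j i) -> Yf i = ovf_start E S X),
      (forall j i, lt j i -> (forall k, ~ (lt j k /\ lt k i)) ->
         exists2 e, ovf_addable E X (Yf j) e & Yf i = Yf j `|` [set e]),
      (forall i, (exists j, lt j i) ->
         (forall j, lt j i -> exists k, lt j k /\ lt k i) ->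
         Yf i = \bigcup_(j in [set j | lt j i]) Yf j)
    & ovf_stop E X (Yf top)].

(* Z is the overflow of X w.r.t. the leaf set S (the blue overflow for
   S = B, the red overflow for S = R): the output of some run. *)
Definition is_overflow (E : set edge) (S : set V) (X Z : set edge) : Prop :=
  exists (I : Type) (lt : I -> I -> Prop) (Yf : I -> set edge) (top : I),
    ovf_run E S X lt Yf top /\ Yf top = Z.

End Overflow.

(* Main.v *)
Require Import Defs.
From mathcomp Require Import all_boot all_order all_algebra.
From mathcomp Require Import boolp classical_sets functions cardinality.
From mathcomp Require Import finmap.
From mathcomp Require Import zify.
Local Open Scope classical_set_scope.
Import GRing.Theory Num.Theory.

Section Aux.
Variable V : choiceType.
Implicit Types (E W X : set (V * V)).

Lemma run_ind E S X (I : Type) (lt : I -> I -> Prop) Yf top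
  (P : set (V * V) -> Prop) :
  ovf_run E S X lt Yf top -> P (ovf_start E S X) ->
  (forall j e, P (Yf j) -> ovf_addable E X (Yf j) e -> P (Yf j `|` [set e])) ->
  (forall i, (exists j, lt j i) -> (forall j, lt j i -> P (Yf j)) ->
     P (\bigcup_(j in [set j | lt j i]) Yf j)) ->
  forall i, P (Yf i).
Proof.
move=> [[wf _ _ _] [H0 Hs Hl _]] P0 Ps Pl i.
elim: (wf i) => {}i _ IH.
have [Hmin|Hnmin] := pselect (forall j, ~ lt j i).
  by rewrite H0.
have [[j [ji Hjk]]|Hns] := pselect (exists j, lt j i /\ forall k, ~ (lt j k /\ lt k i)).
  have [e ea ->] := Hs j i ji Hjk.
  by apply: Ps => //; apply: IH.
have ex : exists j, lt j i.
  apply: contrapT => Hc; apply: Hnmin => j ji; apply: Hc; by exists j.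
rewrite Hl //.
- by apply: Pl => // j ji; apply: IH.
- move=> j ji; apply: contrapT => Hc; apply: Hns; exists j; split => // k [jk ki].
  by apply: Hc; exists k.
Qed.

Lemma run_sub E S X (I : Type) (lt : I -> I -> Prop) Yf top :
  ovf_run E S X lt Yf top ->
  forall i, ovf_start E S X `<=` Yf i /\ Yf i `<=` E.
Proof.
move=> hr; apply: (run_ind _ _ _ _ _ _ _ (fun W => ovf_start E S X `<=` W /\ W `<=` E) hr).
- by split => // e [].
- move=> j e [h1 h2] [eE _ _ _]; split => x.
    by move=> /h1 hx; left.
  by case=> [/h2 //|->].
- move=> i [j ji] IH; split => x.
    move=> hx; exists j => //; exact: (IH j ji).1.
  by case=> k /= ki /(IH k ki).2.
Qed.

Lemma ncard_le W1 W2 : W1 `<=` W2 -> finite_set W2 -> (ncard W1 <= ncard W2)%R.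
Proof.
move=> h f; rewrite /ncard lez_nat; apply: fsubset_leq_card.
by rewrite -fset_set_sub //; exact: sub_finite_set f.
Qed.

Lemma in_fin E W v : locally_finite E -> W `<=` E ->
  finite_set [set e | W e /\ e.2 = v].
Proof.
move=> hlf hW; apply: sub_finite_set (hlf v) => e [/hW ? ?]; by split.
Qed.

Lemma out0 E r W s t : rooted_tree E r -> W `<=` E -> E (s, t) -> ~ W (s, t) ->
  ncard [set e | W e /\ e.1 = s] = 0%R.
Proof.
move=> [h1 h2 _] hW est nW.
suff -> : [set e | W e /\ e.1 = s] = set0 by rewrite /ncard fset_set0 cardfs0.
apply/seteqP; split => // [[a b]] /= [wab eq]; subst a.
have sr : s <> r by have := h1 _ est.
have [w [_ uw]] := h2 s sr.
have e1 := uw _ est; have e2 := uw _ (hW _ wab).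
by subst; apply: nW.
Qed.

Lemma ovf_mono E r S X Y (hT : rooted_tree E r) (hlf : locally_finite E)
  (hXY : X `<=` Y) (hYE : Y `<=` E) bX bY :
  is_overflow E S X bX -> is_overflow E S Y bY -> bY `<=` bX.
Proof.
move=> [I [lt [Yf [top [hr <-]]]]] [I' [lt' [Yf' [top' [hr' <-]]]]].
have hrc := hr; move: hrc => [_ [_ _ _ hstop]].
have [hstart hZE] := run_sub _ _ _ _ _ _ _ hr top.
have hXE : X `<=` E by move=> x /hXY /hYE.
apply: (run_ind _ _ _ _ _ _ _ (fun W => W `<=` Yf top) hr').
- move=> e [eE [nY Se]]; apply: hstart; split => //; split => //.
  by move=> /hXY.
- move=> j e hj [eE nY nYj ha] x; case=> [/hj //|->{x}].
  case: e eE nY nYj ha => s t eE nY nYj ha /=.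
  apply: contrapT => nZ.
  have nX : ~ X (s, t) by move=> /hXY.
  have := hstop _ eE nX nZ.
  rewrite /Acount2 /Acount /= in ha *.
  rewrite (out0 _ _ _ _ _ hT hYE eE nY) in ha.
  rewrite (out0 _ _ _ _ _ hT hZE eE nZ) (out0 _ _ _ _ _ hT hXE eE nX).
  have l1 := ncard_le [set e | Yf' j e /\ e.2 = s]
    [set e | Yf top e /\ e.2 = s] (fun e '(conj a b) => conj (hj _ a) b)
    (in_fin _ _ s hlf hZE).
  have l2 := ncard_le [set e | X e /\ e.2 = s]
    [set e | Y e /\ e.2 = s] (fun e '(conj a b) => conj (hXY _ a) b)
    (in_fin _ _ s hlf hYE).
  have l3 : (0 <= ncard [set e | Yf' j e /\ e.1 = s])%R by [].
  move: ha l1 l2 l3; lia.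
- move=> i _ IH x [j ji]; exact: IH.
Qed.

End Aux.

Theorem lemma2p5 (V : choiceType) (E : set (V * V)) (r : V) (B R : set V)
  (hT : rooted_tree E r) (hlf : locally_finite E)
  (hBleaf : forall v, B v -> leaf E v) (hRleaf : forall v, R v -> leaf E v)
  (hBR : B `&` R = set0)
  (X Y : set (V * V)) (hXY : X `<=` Y) (hYE : Y `<=` E) :
  (forall bX bY, is_overflow E B X bX -> is_overflow E B Y bY -> bY `<=` bX) /\
  (forall rX rY, is_overflow E R X rX -> is_overflow E R Y rY -> rY `<=` rX).
Proof.
split=> ? ?; exact: (ovf_mono _ _ _ _ _ _ hT hlf hXY hYE).
Qed.
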